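(* Let $G$ be a connected graph. If some graph equimorphic to $G$ is not connected, then there are infinitely many pairwise non-isomorphic graphs equimorphic to $G$.
   Context: Graphs are undirected and loopless. $G$ embeds into $G'$ if $G$ is isomorphic to an induced subgraph of $G'$; $G,G'$ are equimorphic if each embeds into the other. *)

(* Defs.v *)
From Stdlib Require Import Relations.

Record graph : Type := Graph {
  vert : Type;
  adj : vert -> vert -> Prop;
  adj_sym : forall x y, adj x y -> adj y x;
  adj_irrefl : forall x, ~ adj x x
}.

Definition embeds (G H : graph) : Prop :=
  exists f : vert G -> vert H,
    (forall x y, f x = f y -> x = y) /\
    (forall x y, adj G x y <-> adj H (f x) (f y)).

Definition equimorphic (G H : graph) : Prop := embeds G H /\ embeds H G.

Definition isomorphic (G H : graph) : Prop :=
  exists (f : vert G -> vert H) (g : vert H -> vert G),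
    (forall x, g (f x) = x) /\ (forall y, f (g y) = y) /\
    (forall x y, adj G x y <-> adj H (f x) (f y)).

Definition connected (G : graph) : Prop :=
  inhabited (vert G) /\
  forall x y : vert G, clos_refl_trans (vert G) (adj G) x y.

(* Main.v *)
Require Import Defs.
From Stdlib Require Import Relations Classical.
From mathcomp Require Import all_boot.

Definition crt (A : graph) := clos_refl_trans (vert A) (adj A).

Definition Fm (G : graph) (m : nat) : graph.
Proof.
refine (@Graph (vert G + 'I_m)%type
  (fun u v => match u, v with inl a, inl b => adj G a b | _, _ => False end) _ _).
- intros [a|a] [b|b]; simpl; try tauto; apply adj_sym.
- intros [a|a]; simpl; [apply adj_irrefl | tauto].
Defined.

Lemma embeds_trans A B C : embeds A B -> embeds B C -> embeds A C.
Proof.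
intros [f [fi fa]] [g [gi ga]]; exists (fun x => g (f x)); split.
- intros x y E; apply fi, gi, E.
- intros x y; rewrite fa ga; tauto.
Qed.

Lemma embed_crt A B (f : vert A -> vert B) :
  (forall x y, adj A x y -> adj B (f x) (f y)) ->
  forall x y, crt A x y -> crt B (f x) (f y).
Proof.
intros fa x y H; induction H.
- apply rt_step, fa, H.
- apply rt_refl.
- eapply rt_trans; eauto.
Qed.

Lemma crt_sym A x y : crt A x y -> crt A y x.
Proof.
intros H; induction H.
- apply rt_step, adj_sym, H.
- apply rt_refl.
- eapply rt_trans; eauto.
Qed.

Section Constr.
Variables (H : graph) (f : vert H -> vert H) (R : vert H -> Prop) (d : vert H).
Hypotheses (fi : forall x y, f x = f y -> x = y)
  (fa : forall x y, adj H x y <-> adj H (f x) (f y))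
  (Rc : forall x y, R x -> adj H x y -> R y)
  (Rf : forall z, R (f z)) (nRd : ~ R d).

Lemma iter_emb j : forall x y,
  (iter j f x = iter j f y -> x = y) /\ (adj H x y <-> adj H (iter j f x) (iter j f y)).
Proof.
induction j as [|j IH]; intros x y; simpl; [tauto|].
destruct (IH x y) as [I1 I2]; split.
- intros E; apply I1, fi, E.
- rewrite I2; apply fa.
Qed.

Lemma sep j p q : R p -> ~ R q ->
  iter j f p <> iter j f q /\ ~ adj H (iter j f p) (iter j f q).
Proof.
intros Rp nRq; destruct (iter_emb j p q) as [I1 I2]; split.
- intros E; apply nRq; rewrite <- (I1 E); exact Rp.
- intros A; apply I2 in A; apply nRq; exact (Rc _ _ Rp A).
Qed.

Lemma split_iter k m x : k < m -> exists p, iter m f x = iter k f p /\ R p.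
Proof.
intros km; exists (iter (m - k) f x); split.
- rewrite -iterD subnKC //; exact: ltnW.
- rewrite -(prednK (n := m - k)); last by rewrite subn_gt0.
  rewrite iterS; apply Rf.
Qed.

Lemma sep2 k m x : k < m ->
  iter m f x <> iter k f d /\ ~ adj H (iter m f x) (iter k f d).
Proof.
intros km; destruct (split_iter k m x km) as [p [-> Rp]]; exact: sep.
Qed.

Lemma Fm_emb (G : graph) (e : vert G -> vert H) m :
  (forall x y, e x = e y -> x = y) ->
  (forall x y, adj G x y <-> adj H (e x) (e y)) ->
  embeds (Fm G m) H.
Proof.
intros ei ea.
exists (fun u : vert (Fm G m) => match u with inl a => iter m f (e a) | inr k => iter k f d end).
split.
- intros [a|a] [b|b]; simpl; intros E.
  + f_equal; apply ei; exact (proj1 (iter_emb m _ _) E).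
  + exfalso; exact (proj1 (sep2 b m (e a) (ltn_ord b)) E).
  + exfalso; exact (proj1 (sep2 a m (e b) (ltn_ord a)) (esym E)).
  + f_equal; apply val_inj; simpl.
    case: (ltngtP a b) => [ab|ba|ab] //.
    * exfalso; exact (proj1 (sep2 a b d ab) (esym E)).
    * exfalso; exact (proj1 (sep2 b a d ba) E).
- intros [a|a] [b|b]; simpl.
  + rewrite ea; apply iter_emb.
  + split; [tauto|]; intros A; exact (proj2 (sep2 b m (e a) (ltn_ord b)) A).
  + split; [tauto|]; intros A; apply adj_sym in A;
      exact (proj2 (sep2 a m (e b) (ltn_ord a)) A).
  + split; [tauto|]; intros A.
    case: (ltngtP a b) => [ab|ba|ab].
    * apply adj_sym in A; exact (proj2 (sep2 a b d ab) A).
    * exact (proj2 (sep2 b a d ba) A).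
    * move: A; rewrite -ab; apply adj_irrefl.
Qed.

End Constr.

Definition isolated (A : graph) (v : vert A) := forall w, ~ adj A v w.

Lemma iso_isolated A B (f : vert A -> vert B) (g : vert B -> vert A) :
  (forall y, f (g y) = y) -> (forall x y, adj A x y <-> adj B (f x) (f y)) ->
  forall v, isolated A v -> isolated B (f v).
Proof.
intros fg fa v iv w Aw; apply (iv (g w)); apply fa; rewrite fg; exact Aw.
Qed.

Lemma isolated_single (G : graph) x y : connected G -> isolated G x -> y = x.
Proof.
intros [_ Gc] ix; generalize (clos_rt_rt1n _ _ _ _ (Gc x y)); intros C.
destruct C as [|z w A _]; [reflexivity| exfalso; exact (ix _ A)].
Qed.

Lemma Fm_le (G : graph) n m : connected G -> isomorphic (Fm G n) (Fm G m) -> n <= m.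
Proof.
intros Gc [p [q [qp [pq pa]]]].
destruct (classic (exists x, isolated G x)) as [[x0 ix]|nI].
- pose pi := fun u : vert (Fm G m) => match u with inl _ => None | inr k => Some k end.
  pose sg := fun o : option 'I_n => match o with None => @inl (vert G) 'I_n x0 | Some k => inr k end.
  have inj : injective (fun o => pi (p (sg o))).
  { intros o1 o2 E.
    have E2 : p (sg o1) = p (sg o2).
    { move: E; rewrite /pi.
      destruct (p (sg o1)) as [a1|k1]; destruct (p (sg o2)) as [a2|k2]; try discriminate.
      - intros _; rewrite (isolated_single G x0 a1 Gc ix) (isolated_single G x0 a2 Gc ix) //.
      - by case => ->. }
    have E3 : sg o1 = sg o2 by rewrite -(qp (sg o1)) E2 qp.
    destruct o1, o2; simpl in E3; try discriminate; congruence. }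
  have := @leq_card (option (ordinal n)) (option (ordinal m)) _ inj; rewrite !card_option !card_ord; done.
- have isoI : forall k : 'I_n, exists j, p (inr k) = inr j.
  { intros k; have I := iso_isolated _ _ p q pq pa (inr k) (fun w => ltac:(destruct w; simpl; tauto)).
    destruct (p (inr k)) as [a|j] eqn:Ep; [|by exists j].
    exfalso; apply nI; exists a; intros w A; exact (I (inl w) A). }
  destruct n as [|n]; [done|].
  destruct (isoI ord0) as [j0 _].
  pose g := fun k : 'I_n.+1 => match p (inr k) with inr j => j | inl _ => j0 end.
  have inj : injective g.
  { intros k1 k2; rewrite /g.
    destruct (isoI k1) as [j1 E1]; destruct (isoI k2) as [j2 E2]; rewrite E1 E2 => E.
    subst j2. have : inr k1 = inr k2 :> vert (Fm G n.+1) by rewrite -(qp (inr k1)) E1 -E2 qp.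
    by case. }
  have := @leq_card (ordinal n.+1) (ordinal m) _ inj; rewrite !card_ord; done.
Qed.

Lemma iso_sym A B : isomorphic A B -> isomorphic B A.
Proof.
intros [p [q [qp [pq pa]]]]; exists q, p; do 2 (split; [assumption|]).
intros x y; rewrite pa !pq; tauto.
Qed.

Theorem lemma1p4 (G : graph) :
  connected G ->
  (exists H : graph, equimorphic H G /\ ~ connected H) ->
  exists F : nat -> graph,
    (forall n, equimorphic (F n) G) /\
    (forall n m, n <> m -> ~ isomorphic (F n) (F m)).
Proof.
intros Gconn [H [[[h [hi ha]] [e [ei ea]]] nH]].
destruct Gconn as [[g0] Gc].
pose R := fun z => crt H (e g0) z.
have Rf : forall z, R (e (h z)).
{ intros z; apply embed_crt; [intros x y; apply ea | apply Gc]. }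
have [d nRd] : exists d, ~ R d.
{ apply NNPP; intros nd.
  apply nH; split; [exact (inhabits (e g0))|].
  intros x y; apply rt_trans with (e g0); [apply crt_sym|];
  apply NNPP; intros Hn; apply nd; eauto. }
exists (Fm G); split.
- intros n; split.
  + apply embeds_trans with H; [|exists h; split; assumption].
    refine (Fm_emb H (fun z => e (h z)) R d _ _ _ Rf nRd G e n ei ea).
    * intros x y E; apply hi, ei, E.
    * intros x y; rewrite ha ea; tauto.
    * intros x y Rx A; eapply rt_trans; [exact Rx| apply rt_step, A].
  + exists inl; split; [by intros x y [=]|]; simpl; tauto.
- intros n m nm I; apply nm; apply/eqP; rewrite eqn_leq.
  apply/andP; split; apply Fm_le with G; try (split; [exact (inhabits g0)|exact Gc]).
  + exact I.
  + exact (iso_sym _ _ I).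
Qed.
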